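(* Let $p\in(1/2,1)$. For $\epsilon\in[0,1)$ not equal to any $\epsilon_m$, let $m=m(\epsilon)$ be the unique integer $m\ge1$ with $\epsilon\in(\epsilon_m,\epsilon_{m+1})$, and define integers $r_1(\epsilon),r_2(\epsilon),\ldots$ by $r_1=m+1$ and, for $n\ge2$, $r_n=m$ if $\sum_{i=1}^{n-1}(r_i\eta-1)+m\eta>1$ and $r_n=m+1$ otherwise. Fix an integer $r\ge1$. Then for every $i\ge2$, $r_i(\epsilon)\to r$ as $\epsilon\to\epsilon_r$ (i.e. $r_i(\epsilon)=r$ for all such $\epsilon$ sufficiently close to $\epsilon_r$; for $r=1$ this is understood as $\epsilon\to\epsilon_1^+$).
   Context: Let $\alpha=p/(1-p)$ and for $r=1,2,\ldots$ let $\epsilon_r=\dfrac{\alpha-\alpha^{1/r}}{\alpha^{1/r+1}-1}$ (an increasing sequence with $\epsilon_1=0$ and $\epsilon_r\to1$). For $\epsilon\in[0,1)$ let $a=p+(1-p)\epsilon$, $b=p(1-\epsilon)$ and $\eta=\eta(\epsilon)=\log\big(a/(1-b)\big)/\log\alpha$. The integer $r_n$ is the number of consecutive $Y$ observations needed, in the $n$-th stage of an enumeration of paths, for the walk (starting at $0$, up-steps $\eta$, down-steps $1$, stopped on leaving $[-1,1]$) to exceed $1$. *)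

(* Defs.v *)
From Stdlib Require Import Reals Lra.
Open Scope R_scope.

Definition alpha (p : R) : R := p / (1 - p).

Definition eps_seq (p : R) (r : nat) : R :=
  (alpha p - Rpower (alpha p) (1 / INR r)) /
  (Rpower (alpha p) (1 / INR r + 1) - 1).

Definition eta (p eps : R) : R :=
  let a := p + (1 - p) * eps in
  let b := p * (1 - eps) in
  ln (a / (1 - b)) / ln (alpha p).

(* r_aux m e k = (r_{k+1}, S_{k+1}) where S_n = sum_{i=1}^n (r_i * e - 1).
   r_1 = m+1; for n >= 2, r_n = m if S_{n-1} + m e > 1, else m+1. *)
Fixpoint r_aux (m : nat) (e : R) (k : nat) : nat * R :=
  match k with
  | O => (S m, INR (S m) * e - 1)
  | S k' =>
      let S_prev := snd (r_aux m e k') in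
      let rn := if Rlt_dec 1 (S_prev + INR m * e) then m else S m in
      (rn, S_prev + INR rn * e - 1)
  end.

(* r_n (indexed from n = 1; the value at n = 0 is irrelevant) *)
Definition r_seq (m : nat) (e : R) (n : nat) : nat := fst (r_aux m e (pred n)).

(* Main.v *)
Require Import Defs.
From Stdlib Require Import Reals Lra Lia Psatz.
Open Scope R_scope.

Lemma div_lt (a b c : R) : 0 < b -> a / b < c -> a < c * b.
Proof. intros Hb H. replace a with (a/b*b) by (field; lra).
  apply Rmult_lt_compat_r; auto. Qed.
Lemma lt_div (a b c : R) : 0 < b -> a < c * b -> a / b < c.
Proof. intros Hb H. replace c with (c*b*/b) by (field; lra).
  unfold Rdiv; apply Rmult_lt_compat_r; [apply Rinv_0_lt_compat|]; auto. Qed.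
Lemma gt_div (a b c : R) : 0 < b -> c / b < a -> c < a * b.
Proof. apply div_lt. Qed.
Lemma div_gt (a b c : R) : 0 < b -> c < a / b -> c * b < a.
Proof. intros Hb H. replace a with (a/b*b) by (field; lra).
  apply Rmult_lt_compat_r; auto. Qed.
Lemma gt_div' (a b c : R) : 0 < b -> c * b < a -> c < a / b.
Proof. intros Hb H. replace c with (c*b*/b) by (field; lra).
  unfold Rdiv; apply Rmult_lt_compat_r; [apply Rinv_0_lt_compat|]; auto. Qed.

Definition cc (p x : R) : R :=
  (alpha p - Rpower (alpha p) x) / (Rpower (alpha p) (x + 1) - 1).

Lemma alpha_gt1 p : 1/2 < p < 1 -> 1 < alpha p.
Proof. intros hp. unfold alpha. apply gt_div'; lra. Qed.

Lemma alpha_q p : 1/2 < p < 1 -> alpha p * (1 - p) = p.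
Proof. intros hp. unfold alpha. field. lra. Qed.

Lemma tpos p x : 1/2 < p < 1 -> 0 < x -> 1 < Rpower (alpha p) x.
Proof. intros hp hx. rewrite <- (Rpower_O (alpha p)) by (pose proof (alpha_gt1 p hp); lra).
  apply Rpower_lt; [apply alpha_gt1; auto| lra]. Qed.

Lemma cc_form p x : 1/2 < p < 1 ->
  cc p x = (alpha p - Rpower (alpha p) x) / (Rpower (alpha p) x * alpha p - 1).
Proof. intros hp. unfold cc. rewrite Rpower_plus, Rpower_1; auto.
  pose proof (alpha_gt1 p hp); lra. Qed.

Lemma ln_t p x : 1/2 < p < 1 -> ln (Rpower (alpha p) x) = x * ln (alpha p).
Proof. intros. unfold Rpower. apply ln_exp. Qed.

Lemma lnalpha p : 1/2 < p < 1 -> 0 < ln (alpha p).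
Proof. intros hp. rewrite <- ln_1. apply ln_increasing; [lra| apply alpha_gt1; auto]. Qed.

Lemma eta_lt p x eps : 1/2 < p < 1 -> 0 < x -> 0 <= eps -> cc p x < eps -> eta p eps < x.
Proof.
  intros hp hx he H. rewrite cc_form in H by auto.
  pose proof (tpos p x hp hx) as Ht. pose proof (alpha_gt1 p hp) as Ha.
  pose proof (alpha_q p hp) as Hq.
  set (t := Rpower (alpha p) x) in *. set (a := alpha p) in *.
  assert (Hd : 0 < t * a - 1) by nra.
  apply gt_div in H; auto.
  assert (H2 : p - t * (1-p) < eps * (t * p - (1-p))).
  { assert (0 < 1 - p) by lra.
    assert (X : (a - t)*(1-p) < eps*(t*a-1)*(1-p)) by (apply Rmult_lt_compat_r; lra).
    replace (p - t*(1-p)) with ((a - t)*(1-p)) by nra.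
    replace (eps * (t * p - (1 - p))) with (eps*(t*a-1)*(1-p)) by nra. exact X. }
  unfold eta. apply lt_div; [apply lnalpha; auto|].
  unfold a. rewrite <- ln_t by auto. fold a. fold t.
  apply ln_increasing.
  - apply Rdiv_lt_0_compat; nra.
  - apply lt_div; nra.
Qed.

Lemma eta_gt p x eps : 1/2 < p < 1 -> 0 < x -> 0 <= eps -> eps < cc p x -> x < eta p eps.
Proof.
  intros hp hx he H. rewrite cc_form in H by auto.
  pose proof (tpos p x hp hx) as Ht. pose proof (alpha_gt1 p hp) as Ha.
  pose proof (alpha_q p hp) as Hq.
  set (t := Rpower (alpha p) x) in *. set (a := alpha p) in *.
  assert (Hd : 0 < t * a - 1) by nra.
  apply div_gt in H; auto.
  assert (H2 : eps * (t * p - (1-p)) < p - t * (1-p)).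
  { assert (0 < 1 - p) by lra.
    assert (X : eps*(t*a-1)*(1-p) < (a - t)*(1-p)) by (apply Rmult_lt_compat_r; lra).
    replace (p - t*(1-p)) with ((a - t)*(1-p)) by nra.
    replace (eps * (t * p - (1 - p))) with (eps*(t*a-1)*(1-p)) by nra. exact X. }
  unfold eta. apply gt_div'; [apply lnalpha; auto|].
  unfold a. rewrite <- ln_t by auto. fold a. fold t.
  apply ln_increasing.
  - lra.
  - apply gt_div'; nra.
Qed.

Lemma cc_decr p x y : 1/2 < p < 1 -> 0 < x -> x < y -> cc p y < cc p x.
Proof.
  intros hp hx hxy. rewrite !cc_form by auto.
  pose proof (tpos p x hp hx) as Ht. pose proof (tpos p y hp ltac:(lra)) as Ht'.
  pose proof (alpha_gt1 p hp) as Ha.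
  assert (Hlt : Rpower (alpha p) x < Rpower (alpha p) y) by (apply Rpower_lt; auto).
  set (t := Rpower (alpha p) x) in *. set (s := Rpower (alpha p) y) in *. set (a := alpha p) in *.
  apply lt_div; [nra|].
  set (k := (a - t) / (t * a - 1)).
  assert (Hk : k * (t * a - 1) = a - t) by (unfold k; field; nra).
  assert (Hka : -1 < k * a).
  { assert (Hk2 : k * a = (a*a - a*t) / (t*a-1)) by (unfold k; field; nra).
    rewrite Hk2. apply gt_div'; nra. }
  nra.
Qed.

Lemma case1 (r : nat) (e : R) (N : nat) :
  0 <= 1 - INR r * e -> INR N * (1 - INR r * e) < e ->
  forall k, (k < N)%nat ->
    snd (r_aux r e k) = (INR k * INR r + INR r + 1) * e - (INR k + 1) /\
    ((1 <= k)%nat -> fst (r_aux r e k) = r).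
Proof.
  intros H0 H1. induction k as [|k IH]; intros Hk.
  - cbn [r_aux fst snd]. rewrite S_INR; change (INR 0) with 0; split; [ring | lia].
  - destruct IH as [IH _]; [lia|].
    assert (HN : INR (S (S k)) <= INR N) by (apply le_INR; lia).
    rewrite !S_INR in HN.
    cbn [r_aux fst snd]. rewrite IH.
    match goal with |- context [Rlt_dec ?a ?b] => destruct (Rlt_dec a b) as [c|c] end.
    + cbn [fst snd]. split; [rewrite S_INR; ring | auto].
    + exfalso. apply c. nra.
Qed.

Lemma case2 (m : nat) (e : R) (N : nat) :
  0 <= INR (S m) * e - 1 -> INR N * (INR (S m) * e - 1) <= e ->
  forall k, (k < N)%nat ->
    snd (r_aux m e k) = (INR k + 1) * (INR (S m) * e - 1) /\
    fst (r_aux m e k) = S m.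
Proof.
  intros H0 H1. induction k as [|k IH]; intros Hk.
  - cbn [r_aux fst snd]. change (INR 0) with 0; split; [ring | auto].
  - destruct IH as [IH _]; [lia|].
    assert (HN : INR (S (S k)) <= INR N) by (apply le_INR; lia).
    rewrite !S_INR in HN. rewrite S_INR in *.
    cbn [r_aux fst snd]. rewrite IH.
    match goal with |- context [Rlt_dec ?a ?b] => destruct (Rlt_dec a b) as [c|c] end.
    + exfalso. nra.
    + cbn [fst snd]. rewrite S_INR. split; [ring | auto].
Qed.

Theorem lemma3 (p : R) (hp : 1 / 2 < p < 1) (r : nat) (hr : (1 <= r)%nat) :
  forall i : nat, (2 <= i)%nat ->
  exists delta : R, 0 < delta /\
    forall (eps : R) (m : nat),
      0 <= eps < 1 ->
      (1 <= m)%nat ->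
      eps_seq p m < eps < eps_seq p (S m) ->
      Rabs (eps - eps_seq p r) < delta ->
      (r = 1%nat -> eps_seq p 1 < eps) ->
      r_seq m (eta p eps) i = r.
Proof.
  intros i Hi.
  assert (HR0 : 1 <= INR r) by (apply (le_INR 1); lia).
  assert (HN0 : 2 <= INR i) by (apply (le_INR 2); lia).
  set (R0 := INR r) in *. set (N0 := INR i) in *.
  set (u := 1 / R0).
  assert (Hu : R0 * u = 1) by (unfold u; field; lra).
  assert (Hu0 : 0 < u) by (unfold u; apply Rdiv_lt_0_compat; lra).
  set (G := / (2 * R0 * (N0 * R0 + 1))).
  assert (HG : G * (2 * R0 * (N0 * R0 + 1)) = 1) by (unfold G; field; nra).
  assert (HG0 : 0 < G) by (unfold G; apply Rinv_0_lt_compat; nra).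
  assert (HGb : (N0 * R0 + 1) * G * R0 = / 2) by (unfold G; field; nra).
  assert (HGu : G < u).
  { assert (0 <= N0*R0*(G*R0)) by (repeat apply Rmult_le_pos; lra).
    assert (G * R0 < 1) by nra. apply (Rmult_lt_reg_l R0); lra. }
  assert (Her : eps_seq p r = cc p u) by reflexivity.
  assert (ER : INR r = R0) by reflexivity. assert (EN : INR i = N0) by reflexivity.
  clearbody u G. clearbody R0 N0.
  assert (Dxu : cc p (u + G) < cc p u) by (apply cc_decr; lra).
  assert (Dxl : cc p u < cc p (u - G)) by (apply cc_decr; lra).
  exists (Rmin (cc p u - cc p (u + G)) (cc p (u - G) - cc p u)).
  split; [apply Rmin_glb_lt; lra|].
  intros eps m He Hm [Hlo Hhi] Hab _.
  rewrite Her in Hab. apply Rabs_def2 in Hab. destruct Hab as [Hab1 Hab2].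
  pose proof (Rmin_l (cc p u - cc p (u + G)) (cc p (u - G) - cc p u)).
  pose proof (Rmin_r (cc p u - cc p (u + G)) (cc p (u - G) - cc p u)).
  assert (HM : 1 <= INR m) by (apply (le_INR 1); lia).
  assert (HSm : INR (S m) = INR m + 1) by apply S_INR.
  assert (Eu : eta p eps < u + G) by (apply eta_lt; lra).
  assert (El : u - G < eta p eps) by (apply eta_gt; lra).
  assert (E1 : eta p eps < 1 / INR m).
  { apply eta_lt; [auto| apply Rdiv_lt_0_compat; lra| lra| exact Hlo]. }
  assert (E2 : 1 / INR (S m) < eta p eps).
  { apply eta_gt; [auto| apply Rdiv_lt_0_compat; lra| lra| exact Hhi]. }
  apply div_gt in E1; [|lra]. apply gt_div in E2; [|lra].
  set (e := eta p eps) in *.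
  assert (Epos : 0 < e) by nra.
  assert (F1 : R0 * e > 1 - R0 * G) by nra.
  assert (F2 : R0 * e < 1 + R0 * G) by nra.
  unfold r_seq.
  destruct (Nat.lt_trichotomy m r) as [Hlt|[Heq|Hgt]].
  - destruct (Nat.eq_dec (S m) r) as [Hs|Hs].
    + assert (HR : INR (S m) = R0) by (rewrite Hs; exact ER).
      rewrite <- Hs.
      apply (case2 m e i); rewrite ?EN; [rewrite HR; nra| rewrite HR | lia].
      assert (e > u) by (rewrite HR in E2; nra).
      assert (N0 * R0 * G * R0 < / 2) by nra.
      assert (N0 * (R0 * e - 1) <= N0 * (R0 * G)) by nra.
      nra.
    + exfalso.
      assert (HS : INR (S m) <= R0 - 1) by (rewrite <- ER; 
        replace (INR (S m)) with (INR (S m) + 1 - 1) by ring; rewrite <- S_INR; 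
        apply Rplus_le_compat_r; apply le_INR; lia).
      assert (R0 - 1 > 1) by (rewrite S_INR in HS; lra).
      assert (1 < (R0 - 1) * e) by nra.
      assert (R0 < (R0 - 1) * (R0 * e)) by nra.
      assert ((R0 - 1) * (R0 * e) < (R0 - 1) * (1 + R0 * G)) by nra.
      assert ((R0 - 1) * R0 * G < / 2) by nra.
      nra.
  - subst m.
    apply (case1 r e i); rewrite ?EN, ?ER; [nra| | lia | lia].
    assert (N0 * (1 - R0 * e) < N0 * (R0 * G)) by nra.
    assert (N0 * R0 * G + G <= u) by nra.
    nra.
  - exfalso.
    assert (HS : R0 + 1 <= INR m) by (rewrite <- ER, <- S_INR; apply le_INR; lia).
    assert ((R0 + 1) * e < 1) by nra.
    assert ((R0 + 1) * (R0 * e) < R0) by nra.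
    assert ((R0 + 1) * (1 - R0 * G) < (R0 + 1) * (R0 * e)) by nra.
    assert (0 <= (N0*R0 - R0) * (G * R0)) by (apply Rmult_le_pos; nra).
    assert ((R0 + 1) * R0 * G <= / 2) by nra.
    nra.
Qed.
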